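(* Let $(S,\mathcal{Q})$ be a weight $-1$ odd Jacobi structure on $\Pi E^*$ (a Jacobi algebroid structure on $E\to M$). On $T^*(\Pi E^*\times\mathbb{R})$ with natural coordinates $(x^A,\eta_\alpha,t,p_A,\pi^\alpha,p)$, where $t$ is an even coordinate on $\mathbb{R}$ of weight $0$ and $p$ its conjugate momentum of weight $0$, define $$\bar S=e^{-t}\big(S-\mathcal{Q}\,p\big).$$ Then $\{\bar S,\bar S\}=0$ for the canonical Poisson bracket of $T^*(\Pi E^*\times\mathbb{R})$, so $\bar S$ is a Schouten structure of weight $-1$ on $\Pi E^*\times\mathbb{R}$.
   Context: Supermanifold conventions; $\tilde a$ is parity. On $T^*(\Pi E^* )$ natural coordinates $(x^A,\eta_\alpha,p_A,\pi^\alpha)$ with parities $\tilde A,\tilde\alpha+1,\tilde A,\tilde\alpha+1$ and weights $0,1,0,-1$. Canonical Poisson bracket on $T^*N$ with coordinates $(x^A,p_A)$: $\{F,G\}=(-1)^{\tilde A\tilde F+\tilde A}\frac{\partial F}{\partial p_A}\frac{\partial G}{\partial x^A}-(-1)^{\tilde A\tilde F}\frac{\partial F}{\partial x^A}\frac{\partial G}{\partial p_A}$. An odd Jacobi structure on $N$ is a pair $(S,\mathcal{Q})$ of odd functions on $T^*N$, $S$ quadratic and $\mathcal{Q}$ linear in momenta, with $\{\mathcal{Q},\mathcal{Q}\}=0$, $\{\mathcal{Q},S\}=0$, $\{S,S\}=-2\mathcal{Q}S$. A Schouten structure is an odd function $S$ on $T^*N$ quadratic in momenta with $\{S,S\}=0$.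 A Jacobi algebroid structure on $E$ is a weight $-1$ odd Jacobi structure on $\Pi E^*$; locally $S=(-1)^{\tilde\alpha}\pi^\alpha Q^A_\alpha p_A+\frac12(-1)^{\tilde\alpha+\tilde\beta}\pi^\alpha\pi^\beta Q^\gamma_{\beta\alpha}\eta_\gamma$, $\mathcal{Q}=\pi^\alpha Q_\alpha$. *)

(* Defs.v *)
(* Local-coordinate (superdomain) model of functions on
   T*(Pi E_dual x R). *)
From HB Require Import structures.
From mathcomp Require Import all_boot all_order all_algebra.
Set Implicit Arguments. Unset Strict Implicit. Unset Printing Implicit Defensive.
Import Order.TTheory GRing.Theory Num.Theory.
Local Open Scope ring_scope.

(* Coordinates on N := Pi E_dual : x^A (A : 'I_m) and eta_alpha (alpha : 'I_k). *)
Notation Nidx m k := ('I_m + 'I_k)%type.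
(* Coordinates on N x R : None is the extra even coordinate t. *)
Notation NRidx m k := (option (Nidx m k)).
(* Coordinates on T*(N x R): inl y = base coordinate y, inr y = its momentum
   (inr None = p, the momentum conjugate to t). *)
Notation TNR m k := (NRidx m k + NRidx m k)%type.

Section Defs.
Variables (m k : nat) (parM : 'I_m -> bool) (parE : 'I_k -> bool).

(* parities: x^A has parity ~A, eta_alpha has parity ~alpha + 1 *)
Definition parN (a : Nidx m k) : bool :=
  match a with inl A => parM A | inr al => ~~ parE al end.
Definition parNR (y : NRidx m k) : bool :=
  match y with None => false | Some a => parN a end.
Definition parT (i : TNR m k) : bool :=
  match i with inl y => parNR y | inr y => parNR y end.

(* weights: x^A, t : 0 ; eta : 1 ; p_A, p : 0 ; pi : -1 *)
Definition wNR (y : NRidx m k) : int :=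
  match y with Some (inr _) => 1 | _ => 0 end.
Definition wT (i : TNR m k) : int :=
  match i with inl y => wNR y | inr y => - wNR y end.
Definition momT (i : TNR m k) : int :=
  match i with inl _ => 0 | inr _ => 1 end.
End Defs.

Section Chart.
Variables (A : nzRingType) (I : finType) (par : I -> bool)
  (P : bool -> A -> Prop) (coord : I -> A) (d : I -> A -> A).

(* A is a superalgebra of functions on a superdomain with coordinates
   coord i (parity par i) and left partial derivatives d i.  P b f means
   "f is homogeneous of parity b". *)
Record superchart : Prop := {
  par_zero : forall b, P b 0;
  par_add : forall b f g, P b f -> P b g -> P b (f + g);
  par_opp : forall b f, P b f -> P b (- f);
  par_one : P false 1;
  par_mul : forall b c f g, P b f -> P c g -> P (addb b c) (f * g);
  par_decomp : forall f, exists f0 f1, [/\ P false f0, P true f1 & f = f0 + f1];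
  par_uniq : forall f, P false f -> P true f -> f = 0;
  scomm : forall b c f g, P b f -> P c g -> f * g = (-1) ^+ (b && c) * (g * f);
  odd_sq : forall f, P true f -> f * f = 0;
  coord_par : forall i, P (par i) (coord i);
  d_add : forall i f g, d i (f + g) = d i f + d i g;
  d_par : forall i b f, P b f -> P (addb b (par i)) (d i f);
  d_leib : forall i b f g, P b f ->
    d i (f * g) = d i f * g + (-1) ^+ (par i && b) * (f * d i g);
  d_coord : forall i j, d i (coord j) = (i == j)%:R;
  d_comm : forall i j f, d i (d j f) = (-1) ^+ (par i && par j) * d j (d i f)
}.

Definition euler (w : I -> int) (F : A) : A :=
  \sum_(i : I) (w i)%:~R * (coord i * d i F).
End Chart.

Definition cbr (A : nzRingType) (X : finType) (parX : X -> bool)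
  (dx dp : X -> A -> A) (bF : bool) (F G : A) : A :=
  \sum_(a : X) ((-1) ^+ (addb (parX a && bF) (parX a)) * (dp a F * dx a G)
                - (-1) ^+ (parX a && bF) * (dx a F * dp a G)).

Section Structures.
Variables (A : nzRingType) (m k : nat) (parM : 'I_m -> bool) (parE : 'I_k -> bool)
  (P : bool -> A -> Prop) (coord : TNR m k -> A) (d : TNR m k -> A -> A).

Definition brN := cbr (parN parM parE) (fun a => d (inl (Some a))) (fun a => d (inr (Some a))).
Definition brNR := cbr (parNR parM parE) (fun y => d (inl y)) (fun y => d (inr y)).

(* F is (the pull-back of) a function on T*(Pi E_dual): independent of t and p *)
Definition on_TN (F : A) : Prop := d (inl None) F = 0 /\ d (inr None) F = 0.

Definition is_exp_minus_t (et : A) : Prop :=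
  [/\ P false et, d (inl None) et = - et & forall i, i != inl None -> d i et = 0].

Definition jacobi_algebroid (S Q : A) : Prop :=
  [/\ on_TN S /\ on_TN Q, P true S /\ P true Q,
      euler coord d (momT (k:=k) (m:=m)) S = S *+ 2 /\ euler coord d (momT (k:=k) (m:=m)) Q = Q,
      euler coord d (wT (m:=m) (k:=k)) S = - S /\ euler coord d (wT (m:=m) (k:=k)) Q = - Q &
      [/\ brN true Q Q = 0, brN true Q S = 0 & brN true S S = - ((Q * S) *+ 2)]].

Definition schouten_wm1 (F : A) : Prop :=
  [/\ P true F, euler coord d (momT (k:=k) (m:=m)) F = F *+ 2,
      euler coord d (wT (m:=m) (k:=k)) F = - F & brNR true F F = 0].
End Structures.

(* Main.v *)
Require Import Defs.
From HB Require Import structures.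
From mathcomp Require Import all_boot all_order all_algebra.
Import GRing.Theory.
Local Open Scope ring_scope.

Lemma big_opt (R : nmodType) (T : finType) (F : option T -> R) :
  \sum_(y : option T) F y = F None + \sum_(a : T) F (Some a).
Proof.
rewrite (bigD1 None) //=; congr (_ + _).
rewrite (reindex_omap Some id) /=; last by case.
by apply: eq_bigl => a; rewrite eqxx.
Qed.

Theorem proposition4p1 (A : nzRingType) (m k : nat)
  (parM : 'I_m -> bool) (parE : 'I_k -> bool)
  (P : bool -> A -> Prop) (coord : TNR m k -> A) (d : TNR m k -> A -> A) :
  superchart (parT parM parE) P coord d ->
  forall et : A, is_exp_minus_t P d et ->
  forall S Q : A, jacobi_algebroid parM parE P coord d S Q ->
  schouten_wm1 parM parE P coord d (et * (S - Q * coord (inr None))).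
Proof.
move=> C et [Pet dtet det0] S Q [[[tS pS] [tQ pQ]] [PS PQ] [mS mQ] [wS wQ] [bQQ bQS bSS]].
set p := coord (inr None).
have comm_even : forall b e f, P false e -> P b f -> e * f = f * e.
  by move=> b e f Pe Pf; rewrite (scomm C Pe Pf) /= expr0 mul1r.
have d0 : forall i, d i 0 = 0.
  move=> i; have h := d_add C i 0 0; rewrite addr0 in h.
  by apply: (addrI (d i 0)); rewrite addr0 -h.
have dN : forall i f, d i (- f) = - d i f.
  by move=> i f; apply/eqP; rewrite -addr_eq0 -(d_add C) addNr d0.
have dB : forall i f g, d i (f - g) = d i f - d i g.
  by move=> i f g; rewrite (d_add C) dN.
have Pp : P false p by exact: (coord_par C (inr None)).
have PQp : P true (Q * p) by exact: (par_mul C PQ Pp).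
set G := S - Q * p.
have PG : P true G by apply: (par_add C) => //; exact: (par_opp C).
have detG : forall i, d i (et * G) = d i et * G + et * d i G.
  by move=> i; rewrite (d_leib C i G Pet) andbF expr0 mul1r.
have dQp : forall i, d i (Q * p) = d i Q * p + (-1) ^+ (parT parM parE i) * (Q * (i == inr None)%:R).
  by move=> i; rewrite (d_leib C i p PQ) andbT /p (d_coord C).
have euler_et : forall w : TNR m k -> int, w (inl None) = 0 ->
   euler coord d w (et * G) = et * euler coord d w G.
  move=> w w0; rewrite /euler mulr_sumr; apply: eq_bigr => i _.
  case: (eqVneq i (inl None)) => [->|ne]; first by rewrite w0 !mul0r mulr0.
  rewrite detG det0 // mul0r add0r [coord i * _]mulrA -(comm_even _ _ _ Pet (coord_par C i)) -mulrA.
  by rewrite mulrzl mulrzl mulrzAr.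
have euler_B : forall w F H, euler coord d w (F - H) = euler coord d w F - euler coord d w H.
  move=> w F H; rewrite /euler -sumrB; apply: eq_bigr => i _.
  by rewrite dB mulrBr mulrBr.
have euler_Qp : forall w : TNR m k -> int, euler coord d w (Q * p) =
    euler coord d w Q * p + (w (inr None))%:~R * (p * Q).
  move=> w; rewrite /euler mulr_suml.
  rewrite (eq_bigr (fun i => (w i)%:~R * (coord i * d i Q) * p + (w i)%:~R * (coord i * ((-1) ^+ parT parM parE i * (Q * (i == inr None)%:R))))); last first.
    by move=> i _; rewrite dQp mulrDr mulrDr !mulrA.
  rewrite big_split /=; congr (_ + _).
  rewrite (bigD1 (inr None)) //= big1 ?addr0; last first.
    by move=> i /negbTE ->; rewrite !mulr0.
  by rewrite ?eqxx /= ?expr0 ?mul1r ?mulr1.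
have central : forall e, P false e -> forall f, e * f = f * e.
  move=> e Pe f; have [f0 [f1 [P0 P1 ->]]] := par_decomp C f.
  by rewrite mulrDr mulrDl (comm_even _ _ _ Pe P0) (comm_even _ _ _ Pe P1).
have etc := central _ Pet.
have pc := central _ Pp.
have Pet2 : P false (et * et) by exact: (par_mul C Pet Pet).
have etc2 := central _ Pet2.
split.
- exact: (par_mul C Pet PG).
- rewrite euler_et // euler_B mS euler_Qp mQ /=.
  by rewrite mulrzl mulr1z -(pc Q) -mulr2n -mulrnBl (pc Q) mulrnAr.
- rewrite euler_et // euler_B wS euler_Qp wQ /=.
  rewrite oppr0 mulr0z mul0r addr0 mulNr opprK -mulrN /G opprB.
  by rewrite addrC.
have subACA : forall a b c e : A, (a - b) - (c - e) = (a - c) - (b - e).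
  by move=> a b c e; rewrite !opprD !opprK addrACA.
have brN_subl : forall X Y Z, brN parM parE d true (X - Y) Z =
    brN parM parE d true X Z - brN parM parE d true Y Z.
  move=> X Y Z; rewrite /brN /cbr -sumrB; apply: eq_bigr => a _.
  by rewrite !dB !mulrBl !mulrBr subACA.
have brN_subr : forall X Y Z, brN parM parE d true X (Y - Z) =
    brN parM parE d true X Y - brN parM parE d true X Z.
  move=> X Y Z; rewrite /brN /cbr -sumrB; apply: eq_bigr => a _.
  by rewrite !dB !mulrBr subACA.
have dYp : forall b Y, P b Y -> forall i, i != inr None -> d i (Y * p) = d i Y * p.
  move=> b Y PY i ne; rewrite (d_leib C i p PY) /p (d_coord C).
  by rewrite (negbTE ne) mulr0 mulr0 addr0.
have brN_pr : forall b X Y, P b Y -> brN parM parE d true X (Y * p) = brN parM parE d true X Y * p.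
  move=> b X Y PY; rewrite /brN /cbr mulr_suml; apply: eq_bigr => a _.
  by rewrite !(dYp _ _ PY) // mulrBl !mulrA.
have brN_pl : forall b X Y, P b X -> brN parM parE d true (X * p) Y = brN parM parE d true X Y * p.
  move=> b X Y PX; rewrite /brN /cbr mulr_suml; apply: eq_bigr => a _.
  rewrite !(dYp _ _ PX) // mulrBl; congr (_ - _); rewrite -!mulrA; congr (_ * _);
  by rewrite -?mulrA (pc _).
have brN_sym : brN parM parE d true S Q = brN parM parE d true Q S.
  rewrite /brN /cbr; apply: eq_bigr => a _.
  rewrite (scomm C (d_par C (inr (Some a)) PS) (d_par C (inl (Some a)) PQ)).
  rewrite (scomm C (d_par C (inl (Some a)) PS) (d_par C (inr (Some a)) PQ)) /=.
  case: (parN parM parE a) => /=.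
  all: rewrite ?expr0 ?expr1 ?mul1r ?mulN1r ?opprK.
  - by rewrite addrC.
  - exact: addrC.
have bGG : brN parM parE d true G G = - (Q * S *+ 2).
  rewrite /G brN_subl !brN_subr (brN_pr _ _ _ PQ) (brN_pl _ _ _ PQ) (brN_pl _ _ _ PQ) (brN_pr _ _ _ PQ).
  rewrite bSS brN_sym bQS bQQ !mul0r.
  have z : forall x : A, x - 0 - (0 - 0) = x by move=> x; rewrite subrr oppr0 !addr0.
  exact: z.
have dtG : d (inl None) G = 0.
  rewrite dB tS dQp tQ mul0r add0r /=.
  by rewrite !mulr0 addr0 oppr0.
have dtF : d (inl None) (et * G) = - (et * G).
  by rewrite detG dtet dtG mulr0 addr0 mulNr.
have dpG : d (inr None) G = - Q.
  rewrite dB pS dQp pQ mul0r add0r /= ?eqxx expr0 mul1r mulr1.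
  by rewrite add0r.
have dpF : d (inr None) (et * G) = - (et * Q).
  by rewrite detG det0 // mul0r add0r dpG mulrN.
have e1 : forall x y, et * x * (et * y) = et * et * (x * y).
  by move=> x y; rewrite -!mulrA; congr (_ * _); rewrite !mulrA etc.
have sc : forall s X : A, s * (et * et * X) = et * et * (s * X).
  by move=> s X; rewrite mulrA -etc2 -mulrA.
rewrite /brNR /cbr big_opt /=.
rewrite [X in _ + X](_ : _ = et * et * brN parM parE d true G G); last first.
  rewrite /brN /cbr mulr_sumr; apply: eq_bigr => a _.
  rewrite !detG !det0 // !mul0r !add0r !e1 mulrBr; congr (_ - _).
  1,2: case: (parN parM parE a) => /=; rewrite ?expr0 ?expr1 ?mul1r ?mulN1r ?mulrN //.
rewrite bGG dtF dpF /= !expr0 !mul1r !mulrNN !e1.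
have GQ : G * Q = - (Q * G).
  by rewrite (scomm C PG PQ) /= expr1 mulN1r.
have QG : Q * G = Q * S.
  by rewrite /G mulrBr mulrA (odd_sq C PQ) mul0r subr0.
have fin : forall y : A, et*et*y - et*et*(-y) + et*et*(y *- 2) = 0.
  by move=> y; rewrite mulrN opprK -!mulrDr -mulr2n subrr mulr0.
rewrite GQ QG; exact: fin.
Qed.
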